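(* Let $\mathcal{H}=\operatorname{coh}\mathbb{X}$ for a weighted projective line of weight type $(p_1,\ldots,p_t)$, and let $y\in K_0(\mathcal{H})$. The linear form $\lambda=\langle y,-\rangle:K_0(\mathcal{H})\to\mathbb{Z}$ satisfies $\lambda\circ(1+\Phi)=0$ if and only if $\Phi y=-y$. In this case $\operatorname{rk}(y)=0$ and $\deg(y)=0$.
   Context: $k$ is algebraically closed; $\mathcal{H}=\operatorname{coh}\mathbb{X}$ is hereditary abelian with Serre duality and AR translation $\tau$. The Euler form on $K_0(\mathcal{H})$ is $\langle[X],[Y]\rangle=\dim_k\operatorname{Hom}(X,Y)-\dim_k\operatorname{Ext}^1(X,Y)$; it is nondegenerate with Gram matrix of determinant $\pm1$. The Coxeter transformation $\Phi$ is the automorphism of $K_0(\mathcal{H})$ with $\Phi[X]=[\tau X]$. $L$ is the structure sheaf, $a=[L]$, $S_0$ a simple sheaf in a homogeneous (rank one) tube, $s_0=[S_0]$. The rank is $\operatorname{rk}(x)=\langle x,s_0\rangle$ and the degree is $\deg(x)=\sum_{j=0}^{p-1}\langle\Phi^ja,\,x-\operatorname{rk}(x)a\rangle$ with $p=\operatorname{lcm}(p_1,\ldots,p_t)$. *)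

(* Defs.v *)
(* Basis of K_0 (Geigle--Lenzing): it is free abelian on
     a      = [L]            (structure sheaf)
     s0     = [S_0]          (simple sheaf at an ordinary point)
     S(i,j) = [S_{i,j}]      for 1 <= i <= t, 1 <= j <= p_i - 1,
   where S_{i,j} (j mod p_i) is the simple sheaf concentrated at the i-th
   exceptional point with Hom(L(j x_i), S_{i,j}) <> 0, so that
   tau S_{i,j} = S_{i,j-1} and [S_{i,0}] = s0 - sum_{j=1}^{p_i-1} [S_{i,j}].
   In Rocq, S(i,j) is indexed by (i : 'I_t, j' : 'I_(p_i - 1)) with j = j'+1. *)
From HB Require Import structures.
From mathcomp Require Import all_boot all_order all_algebra.
Set Implicit Arguments. Unset Strict Implicit. Unset Printing Implicit Defensive.
Import Order.TTheory GRing.Theory Num.Theory.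
Local Open Scope ring_scope.

Definition Idx (ps : seq nat) : finType :=
  option (option {i : 'I_(size ps) & 'I_((nth 1%N ps i).-1)}).

Notation K0 ps := {ffun Idx ps -> int}.

Definition idx_a {ps} : Idx ps := None.
Definition idx_s0 {ps} : Idx ps := Some None.

(* Gram matrix of the Euler form <u,v> = dim Hom - dim Ext^1 on basis elements,
   computed from Serre duality Ext^1(X,Y) = D Hom(Y, tau X):
     <a,a> = 1, <a,s0> = 1, <s0,a> = -1, <s0,s0> = 0,
     <a,S(i,j)> = 0, <S(i,j),a> = -[j = 1], <s0,S> = <S,s0> = 0,
     <S(i,j),S(k,l)> = [i = k] ([j = l] - [l = j - 1]). *)
Definition gram {ps} (u v : Idx ps) : int :=
  match u, v with
  | None, None => 1
  | None, Some None => 1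
  | None, Some (Some _) => 0
  | Some None, None => -1
  | Some None, Some _ => 0
  | Some (Some _), Some None => 0
  | Some (Some x), None => - ((val (tagged x) == 0%N)%:Z)
  | Some (Some x), Some (Some y) =>
      ((val (tag x) == val (tag y)) : int) *
      (((val (tagged x) == val (tagged y)) : int)
       - ((val (tagged y)).+1 == val (tagged x) : int))
  end.

(* coefficient of basis vector v in Phi(basis vector u):
     Phi a      = [L(omega)] = a - 2 s0 + sum_{i,j>=1} S(i,j)
     Phi s0     = s0
     Phi S(i,1) = [S_{i,0}] = s0 - sum_{j>=1} S(i,j)
     Phi S(i,j) = S(i,j-1)   for j >= 2 *)
Definition phiB {ps} (u v : Idx ps) : int :=
  match u, v with
  | None, None => 1
  | None, Some None => -2
  | None, Some (Some _) => 1
  | Some None, Some None => 1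
  | Some None, _ => 0
  | Some (Some x), None => 0
  | Some (Some x), Some None => ((val (tagged x) == 0%N) : int)
  | Some (Some x), Some (Some y) =>
      if val (tagged x) == 0%N then - ((val (tag x) == val (tag y)) : int)
      else ((val (tag x) == val (tag y)) && ((val (tagged y)).+1 == val (tagged x)) : int)
  end.

Definition euler {ps} (x y : K0 ps) : int :=
  \sum_(u : Idx ps) \sum_(v : Idx ps) x u * y v * gram u v.

Definition Phi {ps} (x : K0 ps) : K0 ps :=
  [ffun v => \sum_(u : Idx ps) x u * phiB u v].

Definition aK {ps} : K0 ps := [ffun v => ((v == idx_a) : int)].
Definition s0K {ps} : K0 ps := [ffun v => ((v == idx_s0) : int)].

Definition rk {ps} (x : K0 ps) : int := euler x s0K.
Definition pl (ps : seq nat) : nat := \big[lcmn/1%N]_(q <- ps) q.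
Definition deg {ps} (x : K0 ps) : int :=
  \sum_(j < pl ps) euler (iter j Phi aK) (x - [ffun v => rk x * aK v]).

(* Main.v *)
Require Import Defs.
From HB Require Import structures.
From mathcomp Require Import all_boot all_order all_algebra.
From mathcomp Require Import zify ring.
Import GRing.Theory.
Local Open Scope ring_scope.
Lemma sum_option (T : finType) (F : option T -> int) :
  \sum_(u : option T) F u = F None + \sum_(t : T) F (Some t).
Proof.
rewrite (bigD1 None) //=; congr (_ + _).
rewrite (reindex_omap Some id) /=; last by case.
by apply: eq_bigl => t; rewrite eqxx.
Qed.
Lemma sum_sig (I : finType) (J : I -> finType) (F : {i : I & J i} -> int) :
  \sum_(p : {i : I & J i}) F p = \sum_(i : I) \sum_(j : J i) F (Tagged J j).
Proof.
rewrite (sig_big_dep _ _ (fun i j => F (Tagged J j))) /=.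
by apply: eq_bigr => -[i j].
Qed.

Definition qq (ps : seq nat) (k : 'I_(size ps)) : nat := (nth 1%N ps k).-1.
Definition eS {ps : seq nat} {k : 'I_(size ps)} (j : 'I_(qq ps k)) : Idx ps :=
  Some (Some (Tagged (fun i : 'I_(size ps) => 'I_((nth 1%N ps i).-1)) j)).

Lemma sumIdx ps (F : Idx ps -> int) :
  \sum_(u : Idx ps) F u = F None + F (Some None) +
     \sum_(k : 'I_(size ps)) \sum_(j : 'I_(qq ps k)) F (eS j).
Proof. by rewrite sum_option sum_option sum_sig addrA. Qed.

Definition gam {ps} (x : Idx ps -> int) (k : 'I_(size ps)) (n : nat) : int :=
  if (insub n : option 'I_(qq ps k)) is Some j then x (eS j) else 0.

Lemma gamE ps (x : Idx ps -> int) k (j : 'I_(qq ps k)) : gam x k j = x (eS j).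
Proof. by rewrite /gam valK. Qed.

Lemma gam_out ps (x : Idx ps -> int) k n : (qq ps k <= n)%N -> gam x k n = 0.
Proof. by move=> h; rewrite /gam insubF // ltnNge h. Qed.

Lemma sum_delta n (f : nat -> int) (c : nat) :
  \sum_(j < n) f j * ((nat_of_ord j == c)%N : int) = if (c < n)%N then f c else 0.
Proof.
elim: n => [|n IH]; first by rewrite big_ord0.
rewrite big_ord_recr /= IH.
case: (ltngtP c n) => h.
- by rewrite ltnS (ltnW h) mulr0 addr0.
- by rewrite ltnS leqNgt h /= mulr0 add0r.
- by rewrite h ltnSn /= mulr1 add0r.
Qed.

Lemma gsum_delta ps (x : Idx ps -> int) k (c : nat) :
  \sum_(j : 'I_(qq ps k)) x (eS j) * ((nat_of_ord j == c)%N : int) = gam x k c.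
Proof.
under eq_bigr => j _ do rewrite -gamE.
rewrite (sum_delta (qq ps k) (gam x k)); case: ifP => // /negbT.
by rewrite -leqNgt => /gam_out ->.
Qed.

Lemma gsum ps (x : Idx ps -> int) k :
  \sum_(j : 'I_(qq ps k)) x (eS j) = \sum_(j < qq ps k) gam x k j.
Proof. by apply: eq_bigr => j _; rewrite gamE. Qed.

Lemma sum_kdelta (ps : seq nat) (k : 'I_(size ps)) (G : 'I_(size ps) -> int) :
  \sum_(k' : 'I_(size ps)) ((nat_of_ord k' == nat_of_ord k)%N : int) * G k' = G k.
Proof.
rewrite (bigD1 k) //= eqxx mul1r big1 ?addr0 // => i /negbTE.
by rewrite -val_eqE => ->; rewrite mul0r.
Qed.

Lemma sum_kdelta' (ps : seq nat) (k : 'I_(size ps)) (G : 'I_(size ps) -> int) :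
  \sum_(k' : 'I_(size ps)) ((nat_of_ord k == nat_of_ord k')%N : int) * G k' = G k.
Proof. by rewrite -[RHS](@sum_kdelta ps k); apply: eq_bigr => i _; rewrite eq_sym. Qed.

Lemma gsum_delta' ps (x : Idx ps -> int) k (c : nat) :
  \sum_(j : 'I_(qq ps k)) x (eS j) * ((c == nat_of_ord j)%N : int) = gam x k c.
Proof. by rewrite -gsum_delta; apply: eq_bigr => i _; rewrite eq_sym. Qed.

Lemma tele1 n (g : nat -> int) : \sum_(j < n) (g j - g j.+1) = g 0%N - g n.
Proof.
elim: n => [|n IH]; first by rewrite big_ord0 subrr.
by rewrite big_ord_recr /= IH addrA subrK.
Qed.

Lemma tele2 n (g : nat -> int) :
  \sum_(j < n) (g j - (if nat_of_ord j is j'.+1 then g j' else 0)) = if n is n'.+1 then g n' else 0.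
Proof.
elim: n => [|n IH]; first by rewrite big_ord0.
rewrite big_ord_recr /= IH; case: n {IH} => [|n] /=; first by rewrite !add0r subr0.
by rewrite addrC subrK.
Qed.

Definition Gcol {ps} (y : K0 ps) (v : Idx ps) : int := \sum_u y u * gram u v.
Definition Hrow {ps} (z : K0 ps) (u : Idx ps) : int := \sum_v z v * gram u v.
Definition PT {ps} (f : Idx ps -> int) (w : Idx ps) : int := \sum_v phiB w v * f v.

Lemma Gcol_a ps (y : K0 ps) : Gcol y None = y None - y (Some None) - \sum_k gam y k 0%N.
Proof.
rewrite /Gcol sumIdx /= mulr1 mulrN1; congr (_ + _); rewrite -sumrN.
apply: eq_bigr => k _; rewrite -gsum_delta -sumrN.
by apply: eq_bigr => j _; rewrite mulrN.
Qed.

Lemma Gcol_s ps (y : K0 ps) : Gcol y (Some None) = y None.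
Proof.
rewrite /Gcol sumIdx /= mulr1 mulr0 addr0 big1 ?addr0 // => k _.
by rewrite big1 // => j _; rewrite mulr0.
Qed.

Lemma Gcol_S ps (y : K0 ps) k (m : 'I_(qq ps k)) :
  Gcol y (eS m) = gam y k m - gam y k m.+1.
Proof.
rewrite /Gcol sumIdx /= !mulr0 !addr0 add0r.
under eq_bigr => k0 _ do (under eq_bigr => j _ do rewrite mulrCA mulrBr;
  rewrite -mulr_sumr sumrB).
rewrite sum_kdelta gsum_delta; congr (_ - _).
by rewrite -gsum_delta; apply: eq_bigr => j _; rewrite eq_sym.
Qed.

Lemma gsum_deltaS ps (x : Idx ps -> int) k (c : nat) :
  \sum_(j : 'I_(qq ps k)) x (eS j) * (((nat_of_ord j).+1 == c)%N : int) =
  if c is c'.+1 then gam x k c' else 0.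
Proof.
case: c => [|c]; first by rewrite big1 // => j _; rewrite mulr0.
by rewrite -gsum_delta.
Qed.

Lemma Hrow_a ps (z : K0 ps) : Hrow z None = z None + z (Some None).
Proof.
rewrite /Hrow sumIdx /= !mulr1 big1 ?addr0 // => k _.
by rewrite big1 // => j _; rewrite mulr0.
Qed.

Lemma Hrow_s ps (z : K0 ps) : Hrow z (Some None) = - z None.
Proof.
rewrite /Hrow sumIdx /= mulrN1 mulr0 addr0 big1 ?addr0 // => k _.
by rewrite big1 // => j _; rewrite mulr0.
Qed.

Lemma Hrow_S ps (z : K0 ps) k (m : 'I_(qq ps k)) :
  Hrow z (eS m) = gam z k m - (if nat_of_ord m is m'.+1 then gam z k m' else 0)
     - ((nat_of_ord m == 0%N) : int) * z None.
Proof.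
rewrite /Hrow sumIdx /= mulr0 addr0.
under eq_bigr => k0 _ do (under eq_bigr => j _ do rewrite mulrCA mulrBr;
  rewrite -mulr_sumr sumrB).
rewrite sum_kdelta' gsum_delta' gsum_deltaS.
by rewrite mulrN mulrC addrC.
Qed.

Lemma PT_a ps (f : Idx ps -> int) :
  PT f None = f None - (f (Some None) + f (Some None)) + \sum_k \sum_(j < qq ps k) gam f k j.
Proof.
rewrite /PT sumIdx /= mul1r.
under eq_bigr => k _ do under eq_bigr => j _ do rewrite mul1r.
congr (_ + _); first by ring.
by apply: eq_bigr => k _; rewrite gsum.
Qed.

Lemma PT_s ps (f : Idx ps -> int) : PT f (Some None) = f (Some None).
Proof.
rewrite /PT sumIdx /= mul0r mul1r add0r big1 ?addr0 // => k _.
by rewrite big1 // => j _; rewrite mul0r.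
Qed.

Lemma PT_S0 ps (f : Idx ps -> int) k (m : 'I_(qq ps k)) : nat_of_ord m = 0%N ->
  PT f (eS m) = f (Some None) - \sum_(j < qq ps k) gam f k j.
Proof.
move=> m0; rewrite /PT sumIdx /= m0 /= mul0r add0r mul1r.
under eq_bigr => k0 _ do (under eq_bigr => j _ do rewrite mulNr;
  rewrite sumrN -mulr_sumr -mulrN).
by rewrite sum_kdelta' gsum.
Qed.

Lemma PT_S1 ps (f : Idx ps -> int) k (m : 'I_(qq ps k)) n : nat_of_ord m = n.+1 ->
  PT f (eS m) = gam f k n.
Proof.
move=> mn; rewrite /PT sumIdx /= mn /= !mul0r add0r.
have E : forall k0 : 'I_(size ps), \sum_(j < qq ps k0)
   (((nat_of_ord k == nat_of_ord k0) && ((nat_of_ord j).+1 == n.+1))%N : int) * f (eS j) =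
   ((nat_of_ord k == nat_of_ord k0)%N : int) * gam f k0 n.
  move=> k0; case: (nat_of_ord k == nat_of_ord k0) => /=; last first.
    by rewrite mul0r big1 // => j _; rewrite mul0r.
  by rewrite mul1r -gsum_delta; apply: eq_bigr => j _; rewrite eqSS mulrC.
by under eq_bigr => k0 _ do rewrite E; rewrite sum_kdelta'.
Qed.

Lemma Phi_a ps (y : K0 ps) : Phi y None = y None.
Proof.
rewrite /Phi ffunE sumIdx /= mulr1 mulr0 addr0 big1 ?addr0 // => k _.
by rewrite big1 // => j _; rewrite mulr0.
Qed.

Lemma Phi_s ps (y : K0 ps) :
  Phi y (Some None) = y (Some None) - (y None + y None) + \sum_k gam y k 0%N.
Proof.
rewrite /Phi ffunE sumIdx /= mulr1.
under eq_bigr => k _ do rewrite gsum_delta.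
by ring.
Qed.

Lemma Phi_S ps (y : K0 ps) k (m : 'I_(qq ps k)) :
  Phi y (eS m) = y None - gam y k 0%N + gam y k m.+1.
Proof.
rewrite /Phi ffunE sumIdx /= mulr1 mulr0 addr0 -addrA; congr (_ + _).
have E : forall k0 : 'I_(size ps), \sum_(j < qq ps k0)
   y (eS j) * (if (nat_of_ord j == 0)%N then - ((nat_of_ord k0 == nat_of_ord k)%N : int)
     else (((nat_of_ord k0 == nat_of_ord k) && (m.+1 == nat_of_ord j))%N : int)) =
   ((nat_of_ord k0 == nat_of_ord k)%N : int) * (- gam y k0 0%N + gam y k0 m.+1).
  move=> k0; case: (nat_of_ord k0 == nat_of_ord k) => /=; last first.
    by rewrite mul0r big1 // => j _; case: ifP; rewrite ?oppr0 mulr0.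
  rewrite mul1r -gsum_delta -gsum_delta' -sumrN -big_split /=.
  apply: eq_bigr => j _; case: eqP => [->|_] /=; first by ring.
  by rewrite mulr0 oppr0 add0r.
by under eq_bigr => k0 _ do rewrite E; rewrite sum_kdelta.
Qed.

Lemma euler_G ps (y x : K0 ps) : euler y x = \sum_v x v * Gcol y v.
Proof.
rewrite /euler exchange_big /=; apply: eq_bigr => v _.
rewrite /Gcol mulr_sumr; apply: eq_bigr => u _; ring.
Qed.

Lemma euler_H ps (x z : K0 ps) : euler x z = \sum_u x u * Hrow z u.
Proof.
rewrite /euler; apply: eq_bigr => u _.
rewrite /Hrow mulr_sumr; apply: eq_bigr => v _; ring.
Qed.

Lemma sum_Phi ps (x : K0 ps) (f : Idx ps -> int) :
  \sum_v Phi x v * f v = \sum_w x w * PT f w.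
Proof.
under eq_bigr => v _ do rewrite /Phi ffunE mulr_suml.
rewrite exchange_big /=; apply: eq_bigr => w _.
rewrite /PT mulr_sumr; apply: eq_bigr => v _; ring.
Qed.

Lemma sum_unit ps (w : Idx ps) (f : Idx ps -> int) :
  \sum_v [ffun u => ((u == w) : int)] v * f v = f w.
Proof.
rewrite (bigD1 w) //= ffunE eqxx mul1r big1 ?addr0 // => v /negbTE hv.
by rewrite ffunE hv mul0r.
Qed.

Lemma oppE ps (y : K0 ps) v : (- y) v = - y v.
Proof. by rewrite ffunE. Qed.
Lemma addE ps (y x : K0 ps) v : (y + x) v = y v + x v.
Proof. by rewrite ffunE. Qed.

Definition R3 {ps} (y : K0 ps) (k : 'I_(size ps)) : Prop :=
  forall n : nat, (n < qq ps k)%N -> gam y k n.+1 + gam y k n = gam y k 0%N.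

Definition RR {ps} (y : K0 ps) : Prop :=
  [/\ y None = 0, y (Some None) + y (Some None) + \sum_k gam y k 0%N = 0 &
      forall k, R3 y k].

Lemma phiR ps (y : K0 ps) : Phi y = - y <-> RR y.
Proof.
split.
- move=> H; have h v : Phi y v = - y v by rewrite H oppE.
  have ha := h None; rewrite Phi_a in ha.
  have a0 : y None = 0 by lia.
  split => //.
  + have := h (Some None); rewrite Phi_s a0; lia.
  + move=> k n hn; have := h (eS (Ordinal hn)); rewrite Phi_S a0 -(@gamE _ y k (Ordinal hn)) /=.
    lia.
- case=> a0 hs h3; apply/ffunP => v; rewrite oppE.
  case: v => [[[k j]|]|].
  + pose j' : 'I_(qq ps k) := j.
    change (Phi y (eS j') = - y (eS j')); rewrite Phi_S a0 -gamE.
    have := h3 k j' (ltn_ord j'); lia.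
  + rewrite Phi_s a0; move: hs.
    have E : forall b S : int, b + b + S = 0 -> b - (0 + 0) + S = - b by move=> *; lia.
    exact: E.
  + rewrite Phi_a a0; lia.
Qed.

Lemma gamG ps (y : K0 ps) k n : gam (Gcol y) k n = gam y k n - gam y k n.+1.
Proof.
case: (ltnP n (qq ps k)) => h.
  by rewrite (@gamE _ _ k (Ordinal h)) Gcol_S.
by rewrite !gam_out ?subr0 // ltnW.
Qed.

Lemma sumG ps (y : K0 ps) k : \sum_(j < qq ps k) gam (Gcol y) k j = gam y k 0%N.
Proof.
under eq_bigr => j _ do rewrite gamG.
by rewrite tele1 (gam_out _ _ _ _ (leqnn _)) subr0.
Qed.

Lemma part1_key ps (y x : K0 ps) :
  euler y (x + Phi x) = \sum_w x w * (Gcol y w + PT (Gcol y) w).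
Proof.
rewrite euler_G; under eq_bigr => v _ do rewrite addE mulrDl.
rewrite big_split /= sum_Phi -big_split /=.
by apply: eq_bigr => w _; rewrite mulrDr.
Qed.

Lemma sumG2 ps (y : K0 ps) :
  \sum_k \sum_(j < qq ps k) gam (Gcol y) k j = \sum_k gam y k 0%N.
Proof. by apply: eq_bigr => k _; exact: sumG. Qed.

Lemma E_a ps (y : K0 ps) :
  Gcol y None + PT (Gcol y) None = - (y (Some None) + y (Some None) + \sum_k gam y k 0%N).
Proof.
rewrite PT_a Gcol_a Gcol_s sumG2.
set S := \sum_k _; ring.
Qed.

Lemma E_s ps (y : K0 ps) :
  Gcol y (Some None) + PT (Gcol y) (Some None) = y None + y None.
Proof. by rewrite PT_s Gcol_s. Qed.

Lemma E_S0 ps (y : K0 ps) k (m : 'I_(qq ps k)) : nat_of_ord m = 0%N ->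
  Gcol y (eS m) + PT (Gcol y) (eS m) = y None - gam y k 1%N.
Proof.
move=> m0; rewrite (PT_S0 _ _ _ _ m0) sumG Gcol_S Gcol_s m0; ring.
Qed.

Lemma E_S1 ps (y : K0 ps) k (m : 'I_(qq ps k)) n : nat_of_ord m = n.+1 ->
  Gcol y (eS m) + PT (Gcol y) (eS m) = gam y k n - gam y k n.+2.
Proof.
move=> mn; rewrite (PT_S1 _ _ _ _ _ mn) gamG Gcol_S mn; ring.
Qed.

Lemma part1_E ps (y : K0 ps) :
  (forall w, Gcol y w + PT (Gcol y) w = 0) <-> RR y.
Proof.
split.
- move=> H.
  have a0 : y None = 0 by have := H (Some None); rewrite E_s; lia.
  split => //.
  + have := H None; rewrite E_a.
    have E : forall S : int, - S = 0 -> S = 0 by move=> *; lia.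
    exact: E.
  + move=> k; elim => [|n IH] hn.
    * have := H (eS (Ordinal hn)); rewrite (E_S0 _ y k (Ordinal hn) (erefl _)) a0.
      have E : forall a b : int, 0 - a = 0 -> a + b = b by move=> *; lia.
      exact: E.
    * have := H (eS (Ordinal hn)); rewrite (E_S1 _ y k (Ordinal hn) n (erefl _)).
      have := IH (ltnW hn).
      have E : forall a b c d : int, b + c = d -> c - a = 0 -> a + b = d by move=> *; lia.
      exact: E.
- case=> a0 hs h3 w; case: w => [[[k j]|]|].
  + pose j' : 'I_(qq ps k) := j; change (Gcol y (eS j') + PT (Gcol y) (eS j') = 0).
    case E : (nat_of_ord j') => [|n].
    * rewrite (E_S0 _ _ _ _ E) a0.
      have := h3 k 0%N (leq_ltn_trans (leq0n _) (ltn_ord j')).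
      have E' : forall a b : int, a + b = b -> 0 - a = 0 by move=> *; lia.
      exact: E'.
    * rewrite (E_S1 _ _ _ _ _ E).
      have h1 : (n.+1 < qq ps k)%N by rewrite -E.
      have := h3 k n (ltnW h1); have := h3 k n.+1 h1.
      have E' : forall a b c d : int, a + b = d -> b + c = d -> c - a = 0 by move=> *; lia.
      exact: E'.
  + by rewrite E_s a0 addr0.
  + rewrite E_a hs; exact: oppr0.
Qed.

Lemma gamH ps (y : K0 ps) k n : (n < qq ps k)%N -> y None = 0 ->
  gam (Hrow y) k n = gam y k n - (if n is n'.+1 then gam y k n' else 0).
Proof.
move=> h a0; rewrite (@gamE _ _ k (Ordinal h)) Hrow_S a0 mulr0 subr0 //.
Qed.

Lemma lastg ps (y : K0 ps) k : R3 y k ->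
  (if qq ps k is q'.+1 then gam y k q' else 0) = gam y k 0%N.
Proof.
move=> h3; case E: (qq ps k) => [|q'].
  by rewrite gam_out // E.
have := h3 q'; rewrite E ltnSn (gam_out _ _ _ q'.+1) ?E // add0r; exact.
Qed.

Lemma sumH ps (y : K0 ps) k : y None = 0 -> R3 y k ->
  \sum_(j < qq ps k) gam (Hrow y) k j = gam y k 0%N.
Proof.
move=> a0 h3; rewrite -(lastg _ _ _ h3) -tele2.
by apply: eq_bigr => j _; rewrite gamH.
Qed.

Lemma PTH ps (y : K0 ps) : RR y -> forall w, PT (Hrow y) w = - Hrow y w.
Proof.
case=> a0 hs h3 w; case: w => [[[k j]|]|].
- pose j' : 'I_(qq ps k) := j; change (PT (Hrow y) (eS j') = - Hrow y (eS j')).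
  case E : (nat_of_ord j') => [|n].
  + rewrite (PT_S0 _ _ _ _ E) sumH // Hrow_s Hrow_S E a0 /=.
    ring.
  + rewrite (PT_S1 _ _ _ _ _ E) gamH; last by []; last by rewrite (ltn_trans _ (ltn_ord j')) ?E.
    rewrite Hrow_S E /= mul0r subr0.
    have h1 : (n.+1 < qq ps k)%N by rewrite -E.
    case: n E h1 => [|n] E h1 /=.
    * have := h3 k 0%N (ltnW h1); rewrite subr0.
      have E' : forall a b : int, a + b = b -> b = - (a - b) by move=> *; lia.
      exact: E'.
    * have := h3 k n (ltn_trans (ltnSn _) (ltnW h1)); have := h3 k n.+1 (ltnW h1).
      have E' : forall a b c d : int, a + b = d -> b + c = d -> b - c = - (a - b) by move=> *; lia.
      exact: E'.
- by rewrite PT_s Hrow_s a0 !oppr0.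
- rewrite PT_a Hrow_a Hrow_s a0.
  rewrite (eq_bigr (fun k => gam y k 0%N)); last by move=> k _; exact: sumH.
  move: hs.
  have E' : forall b S : int, b + b + S = 0 -> 0 + b - (- 0 + - 0) + S = - (0 + b) by move=> *; lia.
  exact: E'.
Qed.

Lemma euler_Phi ps (u y : K0 ps) : RR y -> euler (Phi u) y = - euler u y.
Proof.
move=> hR; rewrite !euler_H sum_Phi -sumrN; apply: eq_bigr => w _.
by rewrite (PTH _ _ hR) mulrN.
Qed.

Lemma euler_iter ps (y : K0 ps) j : RR y ->
  euler (iter j Phi aK) y = (-1) ^+ j * y (Some None).
Proof.
move=> hR; elim: j => [|j IH] /=.
  rewrite euler_H expr0 mul1r /aK sum_unit Hrow_a.
  by case: hR => -> _ _; rewrite add0r.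
by rewrite euler_Phi // IH exprS mulN1r mulNr.
Qed.

Lemma altsum p (b : int) :
  \sum_(j < p) (-1) ^+ j * b = if odd p then b else 0.
Proof.
elim: p => [|p IH]; first by rewrite big_ord0.
rewrite big_ord_recr /= IH -signr_odd.
by case: (odd p) => /=; rewrite ?expr0 ?expr1 ?mulN1r ?mul1r ?subrr ?add0r.
Qed.

Lemma dvd_pl ps i : (i < size ps)%N -> (nth 1%N ps i %| pl ps)%N.
Proof.
rewrite /pl; elim: ps i => [|q ps IH] [|i] //= h; rewrite big_cons.
  exact: dvdn_lcml.
exact: dvdn_trans (IH i h) (dvdn_lcmr _ _).
Qed.

Lemma odd_g0 ps (y : K0 ps) k : R3 y k -> odd (nth 1%N ps k) -> gam y k 0%N = 0.
Proof.
move=> h3 oP.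
case E: (qq ps k) => [|r]; first by rewrite gam_out // E.
have oddr : odd r.
  have hP : nth 1%N ps k = r.+2 by move: E; rewrite /qq; case: (nth 1%N ps k) => //= P ->.
  by move: oP; rewrite hP /= negbK.
have claim : forall i, (2 * i + 1 < qq ps k)%N -> gam y k (2 * i + 1) = 0.
  elim => [|i IH] hi.
    have := h3 0%N; rewrite E => /(_ isT).
    have E' : forall a b : int, a + b = b -> a = 0 by move=> *; lia.
    exact: E'.
  have h1 : (2 * i + 1 < qq ps k)%N by lia.
  have h2 := h3 (2 * i + 1)%N h1.
  have h2' := h3 (2 * i + 2)%N ltac:(lia).
  have -> : (2 * i.+1 + 1 = (2 * i + 2).+1)%N by lia.
  move: h2 h2' (IH h1).
  have -> : ((2 * i + 1).+1 = 2 * i + 2)%N by lia.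
  have E' : forall a b c d : int, b + a = d -> c + b = d -> a = 0 -> c = 0 by move=> *; lia.
  exact: E'.
have hr := odd_double_half r; rewrite oddr -muln2 /= in hr.
have := claim r./2 ltac:(rewrite E; lia).
have -> : (2 * r./2 + 1 = r)%N by lia.
have := h3 r; rewrite E ltnSn (gam_out _ _ _ r.+1) ?E // => /(_ isT).
have E' : forall a b : int, 0 + a = b -> a = 0 -> b = 0 by move=> *; lia.
exact: E'.
Qed.

Lemma odd_dvd d p : (d %| p)%N -> odd p -> odd d.
Proof.
move=> hd op; apply/negPn/negP => /negbTE ed.
have : (2 %| d)%N by rewrite dvdn2 ed.
move=> /dvdn_trans /(_ hd); rewrite dvdn2 op //.
Qed.

Theorem lemma3p8 (ps : seq nat) (hps : all (fun q => 0 < q)%N ps) (y : K0 ps) :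
  ((forall x : K0 ps, euler y (x + Phi x) = 0) <-> Phi y = - y) /\
  (Phi y = - y -> rk y = 0 /\ deg y = 0).
Proof.
split.
- rewrite phiR; split.
  + move=> H; apply/part1_E => w.
    have := H [ffun u => ((u == w) : int)].
    by rewrite part1_key (sum_unit _ w (fun w' => Gcol y w' + PT (Gcol y) w')).
  + move=> hR x; rewrite part1_key big1 // => w _.
    by rewrite (proj2 (part1_E _ y) hR w) mulr0.
- move/phiR => hR.
  have rk0 : rk y = 0.
    by rewrite /rk euler_G /s0K sum_unit Gcol_s; case: hR.
  split => //; rewrite /deg.
  have -> : y - [ffun v => rk y * aK v] = y.
    by apply/ffunP => v; rewrite !ffunE rk0 mul0r subr0.
  under eq_bigr => j _ do rewrite euler_iter //.
  rewrite altsum; case: ifP => // op.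
  case: hR => a0 hs h3.
  have S0 : \sum_k gam y k 0%N = 0.
    apply: big1 => k _; apply: (odd_g0 _ _ _ (h3 k)).
    exact: odd_dvd (dvd_pl _ _ (ltn_ord k)) op.
  move: hs; rewrite S0.
  have E' : forall b : int, b + b + 0 = 0 -> b = 0 by move=> *; lia.
  exact: E'.
Qed.
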